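(* Let $G$ be a finite group, $\{(Q_k,\widetilde Q_k)\}_k$ a family of pairs as in the context, and $Q$ a finite $p$-group. The map $$\coprod_k \psi:\ \coprod_k R(Q,\widetilde Q_k)\times_{\mathrm{Aut}(\widetilde Q_k|Q_k)}\mathrm{Cen}_{Q_k}(\widetilde Q_k,\widetilde Q_k,G)\longrightarrow \mathrm{nCen}(Q,G),\qquad \psi(\gamma\times[\delta])=[\delta\circ\gamma],$$ is a well-defined isomorphism of $\mathrm{Out}(Q)$-sets, natural in $G$.
   Context: Let $p$ be a fixed prime; all groups are finite. For groups $Q,G$, $\mathrm{Inj}(Q,G)$ denotes the set of $G$-conjugacy classes $[\alpha]$ of injective homomorphisms $\alpha:Q\to G$ (where $\alpha\sim c_g\circ\alpha$ for $g\in G$); $\mathrm{Out}(Q)$ acts by precomposition. $\mathrm{Cen}(Q,G)\subseteq\mathrm{Inj}(Q,G)$ is the set of classes $[\alpha]$ such that $C_G(\alpha(Q))/Z(\alpha(Q))$ has order prime to $p$, and $\mathrm{nCen}(Q,G)=\mathrm{Inj}(Q,G)\setminus\mathrm{Cen}(Q,G)$. For a $p$-subgroup $H\le G$, $\widetilde H$ denotes a Sylow $p$-subgroup of $H\cdot C_G(H)$. Given $p$-groups $P_1\le\widetilde P_1$ and $P_2\le\widetilde P_2$, we write $\widetilde P_1\sim\widetilde P_2$ (the pairs are equivalent) if there is an isomorphism $s:\widetilde P_1\to\widetilde P_2$ with $s(P_1)=P_2$. A pair arising in $G$ is $(H,\widetilde H)$ with $H\le G$ a $p$-subgroup such that $p$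 divides $|C_G(H)/Z(H)|$. Fix a family $\{(Q_k,\widetilde Q_k)\}_k$ of pairwise inequivalent pairs of $p$-groups $Q_k\le\widetilde Q_k$, each equivalent to a pair arising in $G$, and containing a representative of the equivalence class of every pair arising in $G$. $\mathrm{Cen}_{Q_k}(\widetilde Q_k,\widetilde Q_k,G)$ is the set of classes $[\beta]\in\mathrm{Cen}(\widetilde Q_k,G)$ such that $\widetilde{\beta(Q_k)}\sim\widetilde Q_k$ (i.e. $(\beta(Q_k),\widetilde{\beta(Q_k)})$ is equivalent to $(Q_k,\widetilde Q_k)$). $R(Q,\widetilde Q_k)$ is the set of injective homomorphisms $\alpha:Q\to\widetilde Q_k$ with $\alpha(Q)=Q_k$, and $\mathrm{Aut}(\widetilde Q_k|Q_k)=\{a\in\mathrm{Aut}(\widetilde Q_k): a(Q_k)=Q_k\}$, which acts on $R(Q,\widetilde Q_k)$ by postcomposition and on $\mathrm{Cen}_{Q_k}(\widetilde Q_k,\widetilde Q_k,G)$ by precomposition; $\times_{\mathrm{Aut}(\widetilde Q_k|Q_k)}$ is the balanced product, in which $a\gamma\times[\delta]=\gamma\times[\delta a]$. $\mathrm{Out}(Q)$ acts on the balanced product via precomposition on $R(Q,\widetilde Q_k)$. *)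

(* Defs.v *)
From mathcomp Require Import all_boot all_fingroup all_solvable.
Set Implicit Arguments. Unset Strict Implicit. Unset Printing Implicit Defensive.
Local Open Scope group_scope.

Definition inj_hom (aT rT : finGroupType) (A : {set aT}) (B : {set rT})
  (f : aT -> rT) : Prop :=
  [/\ {in A &, {morph f : x y / x * y}}, {in A &, injective f} & f @: A \subset B].

Definition gconj (aT gT : finGroupType) (A : {set aT}) (G : {set gT})
  (f g : aT -> gT) : Prop :=
  exists2 x, x \in G & {in A, forall a, g a = f a ^ x}.

(* |C_G(H)/Z(H)| is prime to p  (the order of the quotient is the index). *)
Definition cen_cond (gT : finGroupType) (p : nat) (G H : {set gT}) : bool :=
  ~~ (p %| #|'C_G(H) : 'Z(H)|).

Definition in_Cen (aT gT : finGroupType) (p : nat) (A : {set aT}) (G : {set gT})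
  (f : aT -> gT) : Prop := inj_hom A G f /\ cen_cond p G (f @: A).
Definition in_nCen (aT gT : finGroupType) (p : nat) (A : {set aT}) (G : {set gT})
  (f : aT -> gT) : Prop := inj_hom A G f /\ ~~ cen_cond p G (f @: A).

Definition is_tilde (gT : finGroupType) (p : nat) (G H S : {set gT}) : bool :=
  p.-Sylow(H * 'C_G(H)) S.

Definition pair_equiv (aT bT : finGroupType) (P1 S1 : {set aT}) (P2 S2 : {set bT})
  : Prop :=
  exists s : aT -> bT, [/\ inj_hom S1 S2 s, s @: S1 = S2 & s @: P1 = P2].

Definition arising (gT : finGroupType) (p : nat) (G H : {set gT}) : Prop :=
  [/\ H \subset G, p.-group H & p %| #|'C_G(H) : 'Z(H)|].

Definition in_CenQ (tT gT : finGroupType) (p : nat) (Qk Qt : {set tT}) (G : {set gT})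
  (b : tT -> gT) : Prop :=
  in_Cen p Qt G b /\
  exists S : {group gT}, is_tilde p G (b @: Qk) S /\ pair_equiv (b @: Qk) S Qk Qt.

Definition in_R (qT tT : finGroupType) (Q : {set qT}) (Qk Qt : {set tT})
  (c : qT -> tT) : Prop := inj_hom Q Qt c /\ c @: Q = Qk.

Definition in_AutQ (tT : finGroupType) (Qk Qt : {set tT}) (a : tT -> tT) : Prop :=
  [/\ inj_hom Qt Qt a, a @: Qt = Qt & a @: Qk = Qk].

(* phi in Aut(Q) (Out(Q) acts through Aut(Q)). *)
Definition in_Aut (qT : finGroupType) (Q : {set qT}) (f : qT -> qT) : Prop :=
  inj_hom Q Q f /\ f @: Q = Q.

(* Main.v *)
Require Import Defs.
From mathcomp Require Import all_boot all_fingroup all_solvable.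
Local Open Scope group_scope.
Set Implicit Arguments. Unset Strict Implicit. Unset Printing Implicit Defensive.
Lemma HC_join (gT : finGroupType) (G H : {group gT}) :
  H <*> 'C_G(H) = H * 'C_G(H).
Proof. by rewrite norm_joinEr // subIset // cent_sub orbT. Qed.

Lemma tilde_props (gT : finGroupType) (p : nat) (G H S : {group gT}) :
  prime p -> H \subset G -> p.-group H -> is_tilde p G H S ->
  [/\ H \subset S, S \subset H * 'C_G(H), H * ('C_G(H) :&: S) = S,
      p.-Sylow('C_G(H)) ('C_G(H) :&: S)
    & (p %| #|'C_G(H) : 'Z(H)|) = (#|H| < #|S|)%N].
Proof.
move=> pr sHG pH; rewrite /is_tilde -HC_join => sylS.
set C := 'C_G(H).
have nHC : C \subset 'N(H) by rewrite subIset // cent_sub orbT.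
have nHJ : H <| H <*> C by rewrite /normal joing_subl join_subG normG nHC.
have sHS : H \subset S := normal_sub_max_pgroup (Hall_max sylS) pH nHJ.
have sSJ : S \subset H <*> C := pHall_sub sylS.
have eS : H * (C :&: S) = S.
  by rewrite group_modl // -HC_join; apply/setIidPr.
have nCJ : C <| H <*> C.
  rewrite /normal joing_subr join_subG /= normG andbT.
  apply: subset_trans (subcent_norm G H); rewrite subsetI sHG.
  exact: normG.
have sylC : p.-Sylow(C) (C :&: S) := Sylow_setI_normal nCJ sylS.
have eZ : H :&: (C :&: S) = 'Z(H).
  apply/setP=> x; rewrite /center /C !inE; case Hx: (x \in H) => //=.
  by rewrite (subsetP sHG) ?(subsetP sHS) // andbT.
split => //.
have sZC : 'Z(H) \subset C.
  by rewrite -eZ; apply: subset_trans (subsetIr _ _) (subsetIl _ _).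
have pZ : p.-group 'Z(H) := pgroupS (center_sub H) pH.
have hc := mul_cardG H [group of C :&: S]; rewrite /= eS eZ in hc.
have sZCS : 'Z(H) \subset C :&: S by rewrite -eZ subsetIr.
have ZCS := subset_leq_card sZCS.
have Z0 : (0 < #|'Z(H)|)%N := cardG_gt0 _.
have e1 : (p %| #|C : 'Z(H)|) = ~~ p.-Sylow(C) 'Z(H).
  by rewrite /pHall sZC pZ /= (p'natE _ pr) negbK.
rewrite e1 pHallE sZC /= -(card_Hall sylC).
rewrite eqn_leq ZCS /= -ltnNge -(ltn_pmul2l (cardG_gt0 S)) -hc.
by rewrite ltn_pmul2r // (leq_trans Z0 ZCS).
Qed.

Lemma tilde_cen (gT : finGroupType) (p : nat) (G H S : {group gT}) :
  prime p -> H \subset G -> p.-group H -> is_tilde p G H S -> cen_cond p G S.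
Proof.
move=> pr sHG pH tS.
have [sHS sSHC _ _ _] := tilde_props pr sHG pH tS.
move: tS; rewrite /is_tilde -HC_join => sylS.
have sSG : S \subset G.
  apply: subset_trans (pHall_sub sylS) _; rewrite join_subG sHG subsetIl //.
have sZC : 'Z(S) \subset 'C_G(S).
  by rewrite /center setSI.
have pZ : p.-group 'Z(S) := pgroupS (center_sub S) (pHall_pgroup sylS).
have [P sylP sZP] := Sylow_superset sZC pZ.
have sPC : P \subset 'C(S) := subset_trans (pHall_sub sylP) (subsetIr _ _).
have sPCH : P \subset 'C_G(H).
  apply: subset_trans (pHall_sub sylP) _; rewrite setIS // centS //.
have eSP : S <*> P :=: S.
  apply: (sub_pHall sylS) _ (joing_subl _ _) _.
    have -> : (S <*> P)%G :=: S * P by exact: cent_joinEr sPC.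
    by rewrite pgroupM (pHall_pgroup sylS) (pHall_pgroup sylP).
  rewrite join_subG (pHall_sub sylS) /=.
  exact: subset_trans sPCH (joing_subr _ _).
have sPS : P \subset S by rewrite -eSP joing_subr.
have ePZ : P :=: 'Z(S).
  apply/eqP; rewrite eqEsubset sZP andbT /center subsetI sPS //.
rewrite /cen_cond -(p'natE _ pr).
by have := sylP; rewrite ePZ => /and3P[].
Qed.

Lemma tilde_card (gT : finGroupType) (p : nat) (G H S T : {group gT}) :
  is_tilde p G H S -> T \subset H * 'C_G(H) -> #|T| = #|S| -> is_tilde p G H T.
Proof.
rewrite /is_tilde -HC_join => sylS sT eT.
by rewrite pHallE sT eT (card_Hall sylS) eqxx.
Qed.

Lemma tilde_conjC (gT : finGroupType) (p : nat) (G H S1 S2 : {group gT}) :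
  prime p -> H \subset G -> p.-group H -> is_tilde p G H S1 -> is_tilde p G H S2 ->
  exists2 y, y \in 'C_G(H) & S2 :=: S1 :^ y.
Proof.
move=> pr sHG pH t1 t2.
have [_ _ e1 syl1 _] := tilde_props pr sHG pH t1.
have [_ _ e2 syl2 _] := tilde_props pr sHG pH t2.
have [y Cy ey] := Sylow_trans syl1 syl2.
exists y => //.
have nHy : y \in 'N(H).
  by apply: (subsetP (cent_sub H)); apply: (subsetP (subsetIr G _)).
by rewrite -e1 -e2 conjsMg ey (normP nHy).
Qed.

Lemma cstruct_img (aT rT : finGroupType) (D T P : {group aT})
  (f : {morphism D >-> rT}) : 'injm f -> T \subset D -> P \subset T ->
  T \subset P * 'C(P) -> f @* T \subset f @* P * 'C(f @* P).
Proof.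
move=> inj sTD sPT sTPC.
have eT : P * 'C_T(P) = T.
  rewrite /= setIC group_modl //; exact/setIidPr.
have sPD : P \subset D := subset_trans sPT sTD.
rewrite -eT morphimMl // injm_subcent //.
by rewrite mulgS // subsetIr.
Qed.

Lemma ih_morph (aT rT : finGroupType) (A : {set aT}) (B : {set rT}) f :
  inj_hom A B f -> {in A &, {morph f : x y / x * y}}.
Proof. by case. Qed.

Lemma ih_inj (aT rT : finGroupType) (A : {set aT}) (B : {set rT}) f :
  inj_hom A B f -> {in A &, injective f}.
Proof. by case. Qed.

Lemma ih_in (aT rT : finGroupType) (A : {set aT}) (B : {set rT}) f x :
  inj_hom A B f -> x \in A -> f x \in B.
Proof. by case=> _ _ /subsetP h Ax; apply: h; apply: imset_f. Qed.

Lemma ih_sub (aT rT : finGroupType) (A : {set aT}) (B B' : {set rT}) f :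
  inj_hom A B f -> f @: A \subset B' -> inj_hom A B' f.
Proof. by case=> h1 h2 _ h3; split. Qed.

Lemma ih_subl (aT rT : finGroupType) (A A' : {set aT}) (B : {set rT}) f :
  inj_hom A B f -> A' \subset A -> inj_hom A' B f.
Proof.
case=> h1 h2 h3 s; split.
- by move=> x y /(subsetP s) hx /(subsetP s) hy; apply: h1.
- by move=> x y /(subsetP s) hx /(subsetP s) hy; apply: h2.
- by apply: subset_trans h3; apply: imsetS.
Qed.

Lemma ih_comp (aT bT cT : finGroupType) (A : {set aT}) (B : {set bT}) (C : {set cT})
  f g : inj_hom A B f -> inj_hom B C g -> inj_hom A C (g \o f).
Proof.
move=> hf hg; have [fM fI _] := hf; have [gM gI sg] := hg; split.
- by move=> x y Ax Ay /=; rewrite fM // gM // (ih_in hf).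
- by move=> x y Ax Ay /= /gI e; apply: fI => //; apply: e; apply: (ih_in hf).
- rewrite imset_comp; apply: subset_trans sg; apply: imsetS.
  by apply/subsetP=> _ /imsetP[x Ax ->]; apply: (ih_in hf).
Qed.

Definition inv_on (aT rT : finGroupType) (A : {set aT}) (f : aT -> rT) (y : rT) : aT :=
  odflt 1 [pick x in A | f x == y].

Lemma inv_onK (aT rT : finGroupType) (A : {set aT}) (f : aT -> rT) :
  {in A &, injective f} -> {in A, cancel f (inv_on A f)}.
Proof.
move=> fI a Aa; rewrite /inv_on; case: pickP => [x /andP[Ax /eqP e] | n] /=.
  exact: fI.
by have := n a; rewrite Aa eqxx.
Qed.

Lemma inv_onE (aT rT : finGroupType) (A : {set aT}) (f : aT -> rT) y :
  y \in f @: A -> inv_on A f y \in A /\ f (inv_on A f y) = y.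
Proof.
case/imsetP=> a Aa ->; rewrite /inv_on; case: pickP => [x /andP[Ax /eqP e] | n] //=.
by have := n a; rewrite Aa eqxx.
Qed.

Lemma inv_img (aT rT : finGroupType) (A X : {set aT}) (f : aT -> rT) :
  {in A &, injective f} -> X \subset A -> inv_on A f @: (f @: X) = X.
Proof.
move=> fI sXA; rewrite -imset_comp.
apply/setP=> x; apply/imsetP/idP => [[y Xy ->] | Xx].
  by rewrite /= inv_onK // (subsetP sXA).
by exists x => //=; rewrite inv_onK // (subsetP sXA).
Qed.

Lemma ih_inv (aT rT : finGroupType) (A : {group aT}) (B : {set rT}) f :
  inj_hom A B f -> f @: A = B -> inj_hom B A (inv_on A f) /\ inv_on A f @: B = A.
Proof.
move=> hf eB; have [fM fI _] := hf.
have iK := inv_onK fI.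
have iE y : y \in B -> inv_on A f y \in A /\ f (inv_on A f y) = y.
  by rewrite -eB; apply: inv_onE.
split; last by rewrite -eB inv_img.
split.
- move=> y1 y2 /iE[a1 e1] /iE[a2 e2].
  by rewrite -{1}e1 -{1}e2 -fM // iK // groupM.
- by move=> y1 y2 /iE[a1 e1] /iE[a2 e2] e; rewrite -e1 -e2 e.
- by apply/subsetP=> _ /imsetP[y /iE[a _] ->].
Qed.

Lemma pe_trans (aT bT cT : finGroupType) (P1 S1 : {set aT}) (P2 S2 : {set bT})
  (P3 S3 : {set cT}) :
  pair_equiv P1 S1 P2 S2 -> pair_equiv P2 S2 P3 S3 -> pair_equiv P1 S1 P3 S3.
Proof.
move=> [s [h1 e1 f1]] [t [h2 e2 f2]]; exists (t \o s); split.
- exact: (ih_comp h1 h2).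
- by rewrite imset_comp e1.
- by rewrite imset_comp f1.
Qed.

Lemma pe_sym (aT bT : finGroupType) (P1 S1 : {group aT}) (P2 S2 : {set bT}) :
  P1 \subset S1 -> pair_equiv P1 S1 P2 S2 -> pair_equiv P2 S2 P1 S1.
Proof.
move=> sP [s [h e f]]; have [hi ei] := ih_inv h e.
exists (inv_on S1 s); split => //.
by rewrite -f inv_img //; case: h.
Qed.

Lemma pe_self (aT bT : finGroupType) (P S : {set aT}) (B : {set bT}) f :
  inj_hom S B f -> pair_equiv P S (f @: P) (f @: S).
Proof. by move=> h; exists f; split => //; apply: ih_sub h _. Qed.

Lemma ih_injm (aT rT : finGroupType) (D : {group aT}) (B : {set rT}) f
  (h : inj_hom D B f) : 'injm (Morphism (ih_morph h)).
Proof. by apply/injmP; case: h. Qed.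

Lemma ih_E (aT rT : finGroupType) (D : {group aT}) (B : {set rT}) f
  (h : inj_hom D B f) (A : {set aT}) : A \subset D ->
  f @: A = (Morphism (ih_morph h)) @* A.
Proof. by move=> s; rewrite morphimEsub. Qed.

Lemma img_gs (aT rT : finGroupType) (D A : {group aT}) (B : {set rT}) f :
  inj_hom D B f -> A \subset D -> group_set (f @: A).
Proof. by move=> h s; rewrite (ih_E h s); apply: groupP. Qed.

Lemma ih_card (aT rT : finGroupType) (D A : {group aT}) (B : {set rT}) f :
  inj_hom D B f -> A \subset D -> #|f @: A| = #|A|.
Proof. by move=> h s; rewrite (ih_E h s) card_injm // ih_injm. Qed.

Lemma ih_pgroup (aT rT : finGroupType) (p : nat) (D A : {group aT}) (B : {set rT}) f :
  inj_hom D B f -> A \subset D -> p.-group (f @: A) = p.-group A.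
Proof. by move=> h s; rewrite (ih_E h s) injm_pgroup // ih_injm. Qed.

Lemma ih_cstruct (aT rT : finGroupType) (D T P : {group aT}) (B : {set rT}) f :
  inj_hom D B f -> T \subset D -> P \subset T ->
  T \subset P * 'C(P) -> f @: T \subset f @: P * 'C(f @: P).
Proof.
move=> h sTD sPT sT; have sPD := subset_trans sPT sTD.
rewrite (ih_E h sTD) (ih_E h sPD); apply: cstruct_img => //; exact: ih_injm.
Qed.

Lemma Cen_tilde (p : nat) (gT tT : finGroupType) (G : {group gT})
  (Qk Qt : {group tT}) b :
  prime p -> Qk \subset Qt -> p.-group Qt -> in_CenQ p Qk Qt G b ->
  [/\ b @: Qk \subset G, p.-group (b @: Qk) & is_tilde p G (b @: Qk) (b @: Qt)].
Proof.
move=> pr sQ pQt [[hb _] [S [tS [s [hs es fs]]]]].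
pose H := Group (img_gs hb sQ).
pose T := Group (img_gs hb (subxx Qt)).
have sHG : H \subset G.
  by have [_ _ s1] := hb; apply: subset_trans s1; apply: imsetS.
have pH : p.-group H by rewrite /= (ih_pgroup _ hb sQ) (pgroupS sQ).
have sTG : T \subset G by have [_ _ s1] := hb.
split => //.
have [sHS sSHC _ _ _] := tilde_props pr sHG pH tS.
have sSHC' : S \subset H * 'C(H).
  by apply: subset_trans sSHC _; rewrite mulgS // subsetIr.
have h1 := ih_cstruct hs (subxx S) sHS sSHC'.
rewrite es fs in h1.
have h2 := ih_cstruct hb (subxx Qt) sQ h1.
change (is_tilde p G H T).
apply: (@tilde_card _ _ _ H S T tS).
  rewrite [G :&: _]setIC group_modl // subsetI sTG andbT.
  exact: h2.
by rewrite /= (ih_card hb (subxx _)) -es (ih_card hs (subxx _)).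
Qed.

Lemma tr_cen (p : nat) (gT gT' : finGroupType) (G : {group gT}) (G' : {group gT'})
  (F : gT -> gT') (X : {group gT}) :
  inj_hom G G' F -> F @: G = G' -> X \subset G ->
  cen_cond p G' (F @: X) = cen_cond p G X.
Proof.
move=> hF eF sXG; have inj := ih_injm hF.
set m := Morphism (ih_morph hF).
have eG : m @* G = G' by rewrite -(ih_E hF (subxx _)).
have e1 : 'C_G'(m @* X) = m @* 'C_G(X) by rewrite injm_subcent // eG.
rewrite /cen_cond (ih_E hF sXG) e1 -injm_center //.
by rewrite index_injm // subsetIl.
Qed.

Lemma tr_tilde (p : nat) (gT gT' : finGroupType) (G : {group gT}) (G' : {group gT'})
  (F : gT -> gT') (H S : {group gT}) :
  inj_hom G G' F -> F @: G = G' -> H \subset G -> S \subset G ->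
  is_tilde p G H S -> is_tilde p G' (F @: H) (F @: S).
Proof.
move=> hF eF sHG sSG; have inj := ih_injm hF.
set m := Morphism (ih_morph hF).
have eG : m @* G = G' by rewrite -(ih_E hF (subxx _)).
have e1 : 'C_G'(m @* H) = m @* 'C_G(H) by rewrite injm_subcent // eG.
rewrite /is_tilde (ih_E hF sHG) (ih_E hF sSG) e1.
rewrite -morphimMl // -HC_join injm_pHall //.
by rewrite join_subG sHG subsetIl.
Qed.

Lemma tr_CenQ (p : nat) (gT gT' tT : finGroupType) (G : {group gT}) (G' : {group gT'})
  (F : gT -> gT') (Qk Qt : {group tT}) b :
  inj_hom G G' F -> F @: G = G' -> Qk \subset Qt ->
  in_CenQ p Qk Qt G b -> in_CenQ p Qk Qt G' (F \o b).
Proof.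
move=> hF eF sQ [[hb cb] [S [tS pS]]].
pose T := Group (img_gs hb (subxx Qt)).
pose H := Group (img_gs hb sQ).
have sTG : T \subset G by have [_ _ s1] := hb.
have sHG : H \subset G.
  by have [_ _ s1] := hb; apply: subset_trans s1; apply: imsetS.
have sSG : S \subset G.
  move: tS; rewrite /is_tilde => /pHall_sub s1; apply: subset_trans s1 _.
  by rewrite mul_subG // subsetIl.
split; first split.
- exact: ih_comp hb hF.
- by rewrite imset_comp (tr_cen p hF eF sTG).
exists (Group (img_gs hF sSG)); split.
  rewrite imset_comp; exact: (@tr_tilde p _ _ G G' F H S hF eF sHG sSG tS).
apply: pe_trans pS; rewrite imset_comp.
have [hi ei] := ih_inv hF eF.
have hi' : inj_hom (F @: S) G (inv_on G F).
  by apply: ih_subl hi _; rewrite -eF imsetS.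
have := pe_self (F @: (b @: Qk)) hi'.
rewrite !inv_img //; by have [] := hF.
Qed.

Lemma ih_eq (aT rT : finGroupType) (A : {group aT}) (B : {set rT}) f g :
  {in A, f =1 g} -> inj_hom A B f -> inj_hom A B g.
Proof.
move=> e [fM fI sf]; split.
- by move=> x y Ax Ay; rewrite -!e ?groupM // fM.
- by move=> x y Ax Ay; rewrite -!e //; apply: fI.
- by rewrite -(eq_in_imset e).
Qed.

Lemma CenQ_eq (p : nat) (gT tT : finGroupType) (G : {group gT})
  (Qk Qt : {group tT}) b b' :
  Qk \subset Qt -> {in Qt, b =1 b'} -> in_CenQ p Qk Qt G b -> in_CenQ p Qk Qt G b'.
Proof.
move=> sQ e [[hb cb] ex].
have eK : b @: Qk = b' @: Qk.
  by apply: eq_in_imset => x Qx; apply: e; apply: (subsetP sQ).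
split; first split.
- exact: ih_eq e hb.
- by rewrite -(eq_in_imset e).
by rewrite -eK.
Qed.

Lemma conj_ih (gT : finGroupType) (A : {set gT}) x :
  inj_hom A (A :^ x) (conjg^~ x).
Proof.
split => //.
- by move=> y z _ _ /=; rewrite conjMg.
- by move=> y z _ _ /=; apply: conjg_inj.
Qed.

Lemma conjG_ih (gT : finGroupType) (G : {group gT}) x :
  x \in G -> inj_hom G G (conjg^~ x) /\ (conjg^~ x) @: G = G.
Proof.
move=> Gx; have e : G :^ x = G by rewrite conjGid.
by split; [rewrite -{2}e; apply: conj_ih | exact: e].
Qed.

Lemma pe_conj (gT : finGroupType) (P S : {set gT}) x :
  pair_equiv P S (P :^ x) (S :^ x).
Proof. exact: (pe_self P (conj_ih S x)). Qed.

Lemma pe_card (aT bT : finGroupType) (P1 S1 : {set aT}) (P2 S2 : {set bT}) :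
  P1 \subset S1 -> pair_equiv P1 S1 P2 S2 -> #|P1| = #|P2| /\ #|S1| = #|S2|.
Proof.
move=> sP [s [[_ sI _] e f]]; rewrite -e -f.
split; rewrite card_in_imset //.
by move=> x y /(subsetP sP) Sx /(subsetP sP) Sy; apply: sI.
Qed.

Lemma part1 (p : nat) (gT : finGroupType) (G : {group gT}) (tT : finGroupType)
  (Qk Qt : {group tT}) (qT : finGroupType) (Q : {group qT}) c b :
  prime p -> Qk \subset Qt -> p.-group Qt ->
  (exists H : {group gT}, arising p G H /\
     exists S : {group gT}, is_tilde p G H S /\ pair_equiv Qk Qt H S) ->
  in_R Q Qk Qt c -> in_CenQ p Qk Qt G b -> in_nCen p Q G (b \o c).
Proof.
move=> pr sQ pQt [H0 [[sH0G pH0 dH0] [S0 [tS0 pe0]]]] [hc ec] hb.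
have hb' := hb; move: hb' => [[hbi cb] [S [tS peS]]].
split; first exact: ih_comp hc hbi.
rewrite imset_comp ec /cen_cond negbK.
have [sHG pH _] := Cen_tilde pr sQ pQt hb.
pose H := Group (img_gs hbi sQ).
have [_ _ _ _ ->] := @tilde_props gT p G H S pr sHG pH tS.
have [_ _ _ _ e0] := tilde_props pr sH0G pH0 tS0.
rewrite dH0 in e0.
have [c1 c2] := pe_card sQ pe0.
have [sHS _ _ _ _] := @tilde_props gT p G H S pr sHG pH tS.
have [c3 c4] := pe_card sHS peS.
by rewrite /= c4 (ih_card hbi sQ) c1 c2.
Qed.

Lemma part2 (p : nat) (gT : finGroupType) (G : {group gT}) (tT : finGroupType)
  (Qk Qt : {group tT}) (qT : finGroupType) (Q : {group qT}) c b b' :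
  Qk \subset Qt -> in_R Q Qk Qt c -> in_CenQ p Qk Qt G b -> gconj Qt G b b' ->
  in_CenQ p Qk Qt G b' /\ gconj Q G (b \o c) (b' \o c).
Proof.
move=> sQ [hc ec] hb [x Gx ex]; split.
  have [hx ix] := conjG_ih Gx.
  have := tr_CenQ hx ix sQ hb.
  by apply: CenQ_eq => // t Qt_t /=; rewrite ex.
by exists x => // q Qq /=; rewrite ex // (ih_in hc).
Qed.

Lemma part3 (p : nat) (gT : finGroupType) (G : {group gT}) (tT : finGroupType)
  (Qk Qt : {group tT}) (qT : finGroupType) (Q : {group qT}) c b a :
  in_R Q Qk Qt c -> in_CenQ p Qk Qt G b -> in_AutQ Qk Qt a ->
  [/\ in_R Q Qk Qt (a \o c), in_CenQ p Qk Qt G (b \o a)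
    & gconj Q G (b \o (a \o c)) ((b \o a) \o c)].
Proof.
move=> [hc ec] [[hb cb] ex] [ha eaT eaK]; split.
- by split; [exact: ih_comp hc ha | rewrite imset_comp ec].
- split; first split.
  + exact: ih_comp ha hb.
  + by rewrite imset_comp eaT.
  by rewrite imset_comp eaK.
by exists 1 => // q _; rewrite conjg1.
Qed.

Lemma part4 (p : nat) (gT : finGroupType) (G : {group gT})
  (I : finType) (tT : I -> finGroupType) (Qk Qt : forall k : I, {group tT k})
  (qT : finGroupType) (Q : {group qT}) :
  prime p ->
  (forall H S : {group gT}, arising p G H -> is_tilde p G H S ->
     exists k, pair_equiv H S (Qk k) (Qt k)) ->
  p.-group Q ->
  forall f : qT -> gT, in_nCen p Q G f ->
         exists k, exists (c : qT -> tT k) (b : tT k -> gT),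
           [/\ in_R Q (Qk k) (Qt k) c, in_CenQ p (Qk k) (Qt k) G b
             & gconj Q G (b \o c) f].
Proof.
move=> pr hall pQ f [hf nc].
pose H := Group (img_gs hf (subxx Q)).
have sHG : H \subset G by have [_ _ s1] := hf.
have pH : p.-group H by rewrite /= (ih_pgroup _ hf (subxx _)).
have [S sylS] := Sylow_exists p (H <*> 'C_G(H)).
have tS : is_tilde p G H S by rewrite /is_tilde -HC_join.
have aH : arising p G H by split => //; move: nc; rewrite /cen_cond negbK.
have [k [s [hs es fs]]] := hall H S aH tS.
have [sHS sSHC _ _ _] := tilde_props pr sHG pH tS.
have sSG : S \subset G by apply: subset_trans sSHC _; rewrite mul_subG // subsetIl.
have hfS : inj_hom Q S f by apply: (ih_sub hf).
have [hi ei] := ih_inv hs es.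
have sI : {in S &, injective s} by case: hs.
exists k, (s \o f), (inv_on S s); split.
- by split; [exact: ih_comp hfS hs | rewrite imset_comp].
- have eH : inv_on S s @: Qk k = H by rewrite -fs inv_img.
  split; first split.
  + by apply: ih_sub hi _; rewrite ei.
  + by rewrite ei; apply: tilde_cen tS.
  by exists S; rewrite eH; split => //; exists s.
exists 1 => // q Qq; rewrite conjg1 /= inv_onK //.
by apply: (subsetP sHS); apply: imset_f.
Qed.

Lemma core (p : nat) (gT : finGroupType) (G : {group gT})
  (tT : finGroupType) (Qk Qt : {group tT}) (tT' : finGroupType) (Qk' Qt' : {group tT'})
  (qT : finGroupType) (Q : {group qT}) c b c' b' :
  prime p -> Qk \subset Qt -> p.-group Qt -> Qk' \subset Qt' -> p.-group Qt' ->
  in_R Q Qk Qt c -> in_CenQ p Qk Qt G b ->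
  in_R Q Qk' Qt' c' -> in_CenQ p Qk' Qt' G b' ->
  gconj Q G (b \o c) (b' \o c') ->
  exists x y, [/\ x \in G, y \in 'C_G(b' @: Qk'), b' @: Qk' = (b @: Qk) :^ x,
     b' @: Qt' = (b @: Qt) :^ (x * y)
   & {in Q, forall q, b' (c' q) = b (c q) ^ x}].
Proof.
move=> pr sQ pQt sQ' pQt' [hc ec] hb [hc' ec'] hb' [x Gx ex].
exists x.
have eH' : b' @: Qk' = (b @: Qk) :^ x.
  rewrite -ec -ec' /conjugate -!imset_comp; apply: eq_in_imset => q Qq.
  by have := ex q Qq.
have [sHG pH tTl] := Cen_tilde pr sQ pQt hb.
have [sHG' pH' tTl2] := Cen_tilde pr sQ' pQt' hb'.
have [[hbi _] _] := hb; have [[hbi' _] _] := hb'.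
pose H := Group (img_gs hbi sQ).
pose T := Group (img_gs hbi (subxx Qt)).
pose H' := Group (img_gs hbi' sQ').
pose T' := Group (img_gs hbi' (subxx Qt')).
have sTG : T \subset G by have [_ _ s1] := hbi.
have [hx ix] := conjG_ih Gx.
have tx := @tr_tilde p _ _ G G _ H T hx ix sHG sTG tTl.
have tx1 : is_tilde p G ((b @: Qk) :^ x) ((b @: Qt) :^ x) := tx.
rewrite -eH' in tx1.
have [y Cy ey] := @tilde_conjC gT p G H' (T :^ x)%G T' pr sHG' pH' tx1 tTl2.
by exists y; split => //; rewrite conjsgM.
Qed.

Lemma Cy_fix (gT : finGroupType) (G A : {set gT}) y :
  y \in 'C_G(A) -> A :^ y = A.
Proof.
move=> Cy; apply/normP; apply: (subsetP (cent_sub A)).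
exact: (subsetP (subsetIr G _)).
Qed.

Lemma part5 (p : nat) (gT : finGroupType) (G : {group gT})
  (I : finType) (tT : I -> finGroupType) (Qk Qt : forall k : I, {group tT k})
  (qT : finGroupType) (Q : {group qT}) :
  prime p ->
  (forall k, Qk k \subset Qt k /\ p.-group (Qt k)) ->
  (forall k k' : I, k != k' -> ~ pair_equiv (Qk k) (Qt k) (Qk k') (Qt k')) ->
  forall k k' (c : qT -> tT k) (b : tT k -> gT)
              (c' : qT -> tT k') (b' : tT k' -> gT),
         in_R Q (Qk k) (Qt k) c -> in_CenQ p (Qk k) (Qt k) G b ->
         in_R Q (Qk k') (Qt k') c' -> in_CenQ p (Qk k') (Qt k') G b' ->
         gconj Q G (b \o c) (b' \o c') -> k = k'.
Proof.
move=> pr hpair hineq k k' c b c' b' hc hb hc' hb' hg.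
have [sQ pQt] := hpair k; have [sQ' pQt'] := hpair k'.
have [x [y [Gx Cy eH eT _]]] := core pr sQ pQt sQ' pQt' hc hb hc' hb' hg.
have [[hbi _] _] := hb; have [[hbi' _] _] := hb'.
have pe1 := pe_self (Qk k) hbi.
have pe2 := pe_conj (b @: Qk k) (b @: Qt k) (x * y).
rewrite -eT conjsgM -eH (Cy_fix Cy) in pe2.
have pe3 := pe_sym sQ' (pe_self (Qk k') hbi').
case: (eqVneq k k') => // /hineq; case.
exact: pe_trans pe1 (pe_trans pe2 pe3).
Qed.

Lemma part6 (p : nat) (gT : finGroupType) (G : {group gT})
  (tT : finGroupType) (Qk Qt : {group tT}) (qT : finGroupType) (Q : {group qT})
  (c c' : qT -> tT) (b b' : tT -> gT) :
  prime p -> Qk \subset Qt -> p.-group Qt ->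
  in_R Q Qk Qt c -> in_CenQ p Qk Qt G b ->
  in_R Q Qk Qt c' -> in_CenQ p Qk Qt G b' ->
  gconj Q G (b \o c) (b' \o c') ->
  exists a : tT -> tT,
    [/\ in_AutQ Qk Qt a, {in Q, forall x, c' x = a (c x)}
      & gconj Qt G (b' \o a) b].
Proof.
move=> pr sQ pQt hc hb hc' hb' hg.
have [x [y [Gx Cy eH eT ex]]] := core pr sQ pQt sQ pQt hc hb hc' hb' hg.
have [[hbi _] _] := hb; have [[hbi' _] _] := hb'.
have hbi2 : inj_hom Qt (b' @: Qt) b' by apply: ih_sub hbi' _.
have [hi ei] := ih_inv hbi2 (erefl _).
have sI' : {in Qt &, injective b'} by case: hbi'.
have hb1 : inj_hom Qt (b @: Qt) b by apply: ih_sub hbi _.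
have hcj := conj_ih (b @: Qt) (x * y).
rewrite -eT in hcj.
have Gy : y \in G by move: Cy => /setIP[].
exists (inv_on Qt b' \o ((conjg^~ (x * y)) \o b)); split.
- split.
  + exact: ih_comp (ih_comp hb1 hcj) hi.
  + have e1 : (conjg^~ (x * y)) @: (b @: Qt) = b' @: Qt by rewrite eT.
    by rewrite (imset_comp (inv_on Qt b')) (imset_comp (conjg^~ (x * y)) b) e1.
  + have e1 : (conjg^~ (x * y)) @: (b @: Qk) = b' @: Qk.
      by change ((b @: Qk) :^ (x * y) = b' @: Qk); rewrite conjsgM -eH (Cy_fix Cy).
    rewrite (imset_comp (inv_on Qt b')) (imset_comp (conjg^~ (x * y)) b) e1.
    by rewrite inv_img.
- move=> q Qq /=; rewrite conjgM -ex //.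
  have hq : b' (c' q) \in b' @: Qk.
    by apply: imset_f; rewrite -(proj2 hc'); apply: imset_f.
  have -> : b' (c' q) ^ y = b' (c' q).
    apply/conjg_fixP/commgP; move: Cy => /setIP[_ /centP Cy]; apply: commute_sym; exact: Cy.
  by rewrite inv_onK // (ih_in (proj1 hc')).
- exists (x * y)^-1; first by rewrite groupV groupM.
  move=> t Qt_t /=.
  have hm : b t ^ (x * y) \in b' @: Qt by rewrite eT memJ_conjg imset_f.
  by have [_ ->] := inv_onE hm; rewrite conjgK.
Qed.

Lemma part7 (p : nat) (gT : finGroupType) (G : {group gT})
  (tT : finGroupType) (Qk Qt : {group tT}) (qT : finGroupType) (Q : {group qT})
  c b (phi : qT -> qT) :
  in_nCen p Q G (b \o c) -> in_R Q Qk Qt c -> in_Aut Q phi ->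
  [/\ in_R Q Qk Qt (c \o phi), in_nCen p Q G ((b \o c) \o phi)
    & gconj Q G (b \o (c \o phi)) ((b \o c) \o phi)].
Proof.
move=> [h1 n1] [hc ec] [hp ep]; split.
- by split; [exact: ih_comp hp hc | rewrite (imset_comp c phi) ep].
- by split; [exact: ih_comp hp h1 | rewrite (imset_comp (b \o c) phi) ep].
by exists 1 => // q _; rewrite conjg1.
Qed.

Lemma part8 (p : nat) (gT : finGroupType) (G : {group gT})
  (tT : finGroupType) (Qk Qt : {group tT}) (qT : finGroupType) (Q : {group qT})
  (gT' : finGroupType) (G' : {group gT'}) (F : gT -> gT') c b b' :
  Qk \subset Qt ->
  inj_hom G G' F -> F @: G = G' ->
  in_nCen p Q G (b \o c) -> in_R Q Qk Qt c -> in_CenQ p Qk Qt G b ->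
  [/\ in_CenQ p Qk Qt G' (F \o b),
      in_nCen p Q G' (F \o (b \o c)),
      (gconj Qt G b b' -> gconj Qt G' (F \o b) (F \o b'))
    & gconj Q G' ((F \o b) \o c) (F \o (b \o c))].
Proof.
move=> sQ hF eF [h1 n1] hc hb; split.
- exact: tr_CenQ hF eF sQ hb.
- split; first exact: ih_comp h1 hF.
  have sXG : Group (img_gs h1 (subxx Q)) \subset G by have [_ _ s] := h1.
  by rewrite (imset_comp F (b \o c)) (tr_cen p hF eF sXG).
- move=> [x Gx ex]; exists (F x); first exact: ih_in hF Gx.
  move=> t Qt_t /=; rewrite ex //.
  have [[hbi _] _] := hb.
  have := @morphJ _ _ G (Morphism (ih_morph hF)) (b t) x (ih_in hbi Qt_t) Gx.
  by [].
by exists 1 => // q _; rewrite conjg1.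
Qed.
Theorem lemma4
  (p : nat) (gT : finGroupType) (G : {group gT})
  (I : finType) (tT : I -> finGroupType)
  (Qk Qt : forall k : I, {group tT k})
  (qT : finGroupType) (Q : {group qT})
  (p_pr : prime p)
  (hpair : forall k, Qk k \subset Qt k /\ p.-group (Qt k))
  (hineq : forall k k' : I, k != k' ->
     ~ pair_equiv (Qk k) (Qt k) (Qk k') (Qt k'))
  (hrep : forall k, exists H : {group gT}, arising p G H /\
     exists S : {group gT}, is_tilde p G H S /\ pair_equiv (Qk k) (Qt k) H S)
  (hall : forall H S : {group gT}, arising p G H -> is_tilde p G H S ->
     exists k, pair_equiv H S (Qk k) (Qt k))
  (pQ : p.-group Q) :
  (* psi is well defined, with values in nCen(Q,G) *)
  (forall k (c : qT -> tT k) (b : tT k -> gT),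
         in_R Q (Qk k) (Qt k) c -> in_CenQ p (Qk k) (Qt k) G b ->
         in_nCen p Q G (b \o c)) /\
      (forall k (c : qT -> tT k) (b b' : tT k -> gT),
         in_R Q (Qk k) (Qt k) c -> in_CenQ p (Qk k) (Qt k) G b ->
         gconj (Qt k) G b b' ->
         in_CenQ p (Qk k) (Qt k) G b' /\ gconj Q G (b \o c) (b' \o c)) /\
      (forall k (c : qT -> tT k) (b : tT k -> gT) (a : tT k -> tT k),
         in_R Q (Qk k) (Qt k) c -> in_CenQ p (Qk k) (Qt k) G b ->
         in_AutQ (Qk k) (Qt k) a ->
         [/\ in_R Q (Qk k) (Qt k) (a \o c), in_CenQ p (Qk k) (Qt k) G (b \o a)
           & gconj Q G (b \o (a \o c)) ((b \o a) \o c)]) /\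
  (* psi is surjective *)
      (forall f : qT -> gT, in_nCen p Q G f ->
         exists k, exists (c : qT -> tT k) (b : tT k -> gT),
           [/\ in_R Q (Qk k) (Qt k) c, in_CenQ p (Qk k) (Qt k) G b
             & gconj Q G (b \o c) f]) /\
  (* psi is injective on the coproduct of balanced products *)
      (forall k k' (c : qT -> tT k) (b : tT k -> gT)
              (c' : qT -> tT k') (b' : tT k' -> gT),
         in_R Q (Qk k) (Qt k) c -> in_CenQ p (Qk k) (Qt k) G b ->
         in_R Q (Qk k') (Qt k') c' -> in_CenQ p (Qk k') (Qt k') G b' ->
         gconj Q G (b \o c) (b' \o c') -> k = k') /\
      (forall k (c c' : qT -> tT k) (b b' : tT k -> gT),
         in_R Q (Qk k) (Qt k) c -> in_CenQ p (Qk k) (Qt k) G b ->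
         in_R Q (Qk k) (Qt k) c' -> in_CenQ p (Qk k) (Qt k) G b' ->
         gconj Q G (b \o c) (b' \o c') ->
         exists a : tT k -> tT k,
           [/\ in_AutQ (Qk k) (Qt k) a, {in Q, forall x, c' x = a (c x)}
             & gconj (Qt k) G (b' \o a) b]) /\
  (* psi is Out(Q)-equivariant (Out(Q) acting through Aut(Q) by precomposition) *)
      (forall k (c : qT -> tT k) (b : tT k -> gT) (phi : qT -> qT),
         in_R Q (Qk k) (Qt k) c -> in_CenQ p (Qk k) (Qt k) G b -> in_Aut Q phi ->
         [/\ in_R Q (Qk k) (Qt k) (c \o phi), in_nCen p Q G ((b \o c) \o phi)
           & gconj Q G (b \o (c \o phi)) ((b \o c) \o phi)])
  (* psi is natural in G (with respect to group isomorphisms G ~= G') *)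
    /\ (forall (gT' : finGroupType) (G' : {group gT'}) (f : gT -> gT'),
         inj_hom G G' f -> f @: G = G' ->
         forall k (c : qT -> tT k) (b b' : tT k -> gT),
         in_R Q (Qk k) (Qt k) c -> in_CenQ p (Qk k) (Qt k) G b ->
         [/\ in_CenQ p (Qk k) (Qt k) G' (f \o b),
             in_nCen p Q G' (f \o (b \o c)),
             (gconj (Qt k) G b b' -> gconj (Qt k) G' (f \o b) (f \o b'))
           & gconj Q G' ((f \o b) \o c) (f \o (b \o c))]).
Proof.
have P1 : forall k (c : qT -> tT k) (b : tT k -> gT),
    in_R Q (Qk k) (Qt k) c -> in_CenQ p (Qk k) (Qt k) G b ->
    in_nCen p Q G (b \o c).
  move=> k c b hc hb; have [sQ pQt] := hpair k.
  exact: part1 p_pr sQ pQt (hrep k) hc hb.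
split; first exact: P1.
split.
  move=> k c b b' hc hb hg; have [sQ _] := hpair k; exact: part2 sQ hc hb hg.
split.
  move=> k c b a hc hb ha; exact: part3 hc hb ha.
split; first exact: part4 p_pr hall pQ.
split; first exact: part5 p_pr hpair hineq.
split.
  move=> k c c' b b' hc hb hc' hb' hg; have [sQ pQt] := hpair k.
  exact: part6 p_pr sQ pQt hc hb hc' hb' hg.
split.
  move=> k c b phi hc hb hphi; exact: part7 (P1 k c b hc hb) hc hphi.
move=> gT' G' f hf ef k c b b' hc hb; have [sQ _] := hpair k.
exact: part8 sQ hf ef (P1 k c b hc hb) hc hb.
Qed.
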